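(* Let $n\ge 2$ and $u,v>0$. There exists an $n$-simplex having one edge of length $v$ and all its remaining edges of length $u$ if and only if $$0<\frac{v}{u}<\sqrt{\frac{2n}{n-1}}.$$
   Context: An $n$-simplex is the convex hull of $n+1$ affinely independent points in a Euclidean space (so it is non-degenerate). *)

(* Defs.v *)
From HB Require Import structures.
From mathcomp Require Import all_boot all_order all_algebra.
Set Implicit Arguments. Unset Strict Implicit. Unset Printing Implicit Defensive.
Import Order.TTheory GRing.Theory Num.Theory.
Local Open Scope ring_scope.

Definition edist (R : rcfType) (d : nat) (x y : 'rV[R]_d) : R :=
  Num.sqrt (\sum_(k < d) (x ord0 k - y ord0 k) ^+ 2).

Definition aff_indep (R : rcfType) (d m : nat) (p : 'I_m -> 'rV[R]_d) : Prop :=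
  forall c : 'I_m -> R,
    \sum_(i < m) c i = 0 -> \sum_(i < m) c i *: p i = 0 -> forall i, c i = 0.

Definition one_edge_simplex (R : rcfType) (n d : nat) (p : 'I_n.+1 -> 'rV[R]_d)
    (u v : R) : Prop :=
  aff_indep p /\
  exists i j : 'I_n.+1, i != j /\
    forall k l : 'I_n.+1, k != l ->
      edist (p k) (p l) =
        (if ((k == i) && (l == j)) || ((k == j) && (l == i)) then v else u).

(* Main.v *)
Require Import Defs.
From HB Require Import structures.
From mathcomp Require Import all_boot all_order all_algebra.
From mathcomp Require Import ring lra.
Set Implicit Arguments. Unset Strict Implicit. Unset Printing Implicit Defensive.
Import Order.TTheory GRing.Theory Num.Theory.
Local Open Scope ring_scope.


Definition nrm2 (R : rcfType) (d : nat) (z : 'rV[R]_d) : R := \sum_(c < d) z ord0 c ^+ 2.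

Lemma nrm2_ge0 (R : rcfType) d (z : 'rV[R]_d) : 0 <= nrm2 z.
Proof. by apply: sumr_ge0 => c _; rewrite sqr_ge0. Qed.

Lemma nrm2_eq0 (R : rcfType) d (z : 'rV[R]_d) : nrm2 z = 0 -> z = 0.
Proof.
move=> /eqP; rewrite psumr_eq0; last by move=> c _; rewrite sqr_ge0.
move=> /allP H; apply/rowP => c; rewrite mxE.
by have := H c (mem_index_enum c); rewrite sqrf_eq0 => /eqP.
Qed.

Lemma edistE (R : rcfType) d (x y : 'rV[R]_d) : edist x y = Num.sqrt (nrm2 (x - y)).
Proof. by rewrite /edist /nrm2; congr Num.sqrt; apply: eq_bigr => c _; rewrite !mxE. Qed.

Lemma sum_ind (R : rcfType) m (F : 'I_m -> R) (j : 'I_m) :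
  \sum_(l < m) F l * (l == j)%:R = F j.
Proof.
rewrite (bigD1 j) //= eqxx mulr1 big1 ?addr0 // => l /negbTE ->.
by rewrite mulr0.
Qed.

Lemma coordA (R : rcfType) m (y a : 'I_m -> R) : \sum_(k < m) a k = 0 ->
  (\sum_(k < m) a k * y k) ^+ 2 =
  - 2^-1 * \sum_(k < m) \sum_(l < m) a k * a l * (y k - y l) ^+ 2.
Proof.
move=> Ha.
transitivity (- 2^-1 * \sum_(k < m) \sum_(l < m) (a k * y k ^+ 2 * a l + a k * (a l * y l ^+ 2)
       - 2 * (a k * y k * (a l * y l)))); last first.
  by congr (_ * _); apply: eq_bigr => k _; apply: eq_bigr => l _; ring.
symmetry.
under eq_bigr => k _ do rewrite sumrB big_split /= -mulr_sumr Ha mulr0 add0r -mulr_sumr -mulr_sumr.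
rewrite sumrB -mulr_suml Ha mul0r add0r.
under eq_bigr => k _ do rewrite -mulr_sumr.
rewrite -mulr_sumr -mulr_suml.
by field.
Qed.

Lemma nrm2A (R : rcfType) d m (x : 'I_m -> 'rV[R]_d) (a : 'I_m -> R) : \sum_(k < m) a k = 0 ->
  nrm2 (\sum_(k < m) a k *: x k) =
  - 2^-1 * \sum_(k < m) \sum_(l < m) a k * a l * nrm2 (x k - x l).
Proof.
move=> Ha; rewrite /nrm2.
transitivity (\sum_(c < d) (\sum_(k < m) a k * x k ord0 c) ^+ 2).
  by apply: eq_bigr => c _; rewrite summxE; congr (_ ^+ 2); apply: eq_bigr => k _; rewrite mxE.
under eq_bigr => c _ do rewrite coordA //.
rewrite -mulr_sumr; congr (_ * _).
rewrite exchange_big; apply: eq_bigr => k _.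
rewrite exchange_big; apply: eq_bigr => l _.
by rewrite mulr_sumr; apply: eq_bigr => c _; rewrite !mxE.
Qed.



Definition cf (R : rcfType) (s al be ga : R) (a m : nat) : R :=
  match a with
  | 0 => if m == 0 then be else if m == 1 then ga else al
  | 1 => if m == 0 then - be else if m == 1 then ga else al
  | _ => if m == a then s else 0
  end.

Lemma peel (R : rcfType) K (g : nat -> R) :
  \sum_(m < K.+3) g m = g 0%N + g 1%N + \sum_(m < K.+1) g m.+2.
Proof. by rewrite 2!big_ord_recl addrA; congr (_ + _ + _); apply: eq_bigr => m _; rewrite !lift0. Qed.

Lemma sum_indn (R : rcfType) m (F : nat -> R) c : (c < m)%N ->
  \sum_(l < m) F l * ((l : nat) == c)%:R = F c.
Proof. move=> Hc; exact: (sum_ind (fun l : 'I_m => F l) (Ordinal Hc)). Qed.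

Lemma dist_cf (R : rcfType) K (s al be ga : R) a b :
  (a <= K.+2)%N -> (b <= K.+2)%N -> a != b ->
  \sum_(m < K.+3) (cf s al be ga a m - cf s al be ga b m) ^+ 2 =
  if ((a == 0%N) && (b == 1%N)) || ((a == 1%N) && (b == 0%N)) then 4 * be ^+ 2
  else if (1 < a)%N && (1 < b)%N then 2 * s ^+ 2
  else be ^+ 2 + ga ^+ 2 + al ^+ 2 *+ K.+1 + (s ^+ 2 - 2 * al * s).
Proof.
move=> Ha Hb Hab; rewrite (peel K (fun m => (cf s al be ga a m - cf s al be ga b m) ^+ 2)).
have T1 : forall e, (e < K.+1)%N ->
   \sum_(m < K.+1) (al - (if (m : nat).+2 == e.+2 then s else 0)) ^+ 2 = al ^+ 2 *+ K.+1 + (s ^+ 2 - 2 * al * s).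
  move=> e He.
  rewrite (eq_bigr (fun m : 'I_K.+1 => al ^+ 2 + (s ^+ 2 - 2 * al * s) * ((m : nat) == e)%:R)) => [|m _].
    by rewrite big_split /= sumr_const card_ord (sum_indn (fun=> s ^+ 2 - 2 * al * s)).
  by rewrite !eqSS; case: (eqVneq (m : nat) e) => _ /=; ring.
have T2 : forall e, (e < K.+1)%N ->
   \sum_(m < K.+1) ((if (m : nat).+2 == e.+2 then s else 0) - al) ^+ 2 = al ^+ 2 *+ K.+1 + (s ^+ 2 - 2 * al * s).
  move=> e He; rewrite -(T1 e He); apply: eq_bigr => m _; ring.
case: a Ha Hab => [|[|c]] Ha Hab; case: b Hb Hab => [|[|e]] Hb Hab //=.
- rewrite big1 ?addr0; first by ring.
  by move=> m _; rewrite subrr expr0n.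
- by rewrite T1 //; ring.
- rewrite big1 ?addr0; first by ring.
  by move=> m _; rewrite subrr expr0n.
- by rewrite T1 //; ring.
- by rewrite T2 //; ring.
- by rewrite T2 //; ring.
- rewrite (eq_bigr (fun m : 'I_K.+1 => s ^+ 2 * ((m : nat) == c)%:R + s ^+ 2 * ((m : nat) == e)%:R)) => [|m _].
    by rewrite big_split /= !(sum_indn (fun=> s ^+ 2)) //; ring.
  rewrite !eqSS; case: (eqVneq (m : nat) c) => [Ec|_]; case: (eqVneq (m : nat) e) => [Ee|_] /=; try ring.
  by move: Hab; rewrite -Ec -Ee eqxx.
Qed.

Lemma backward (R : rcfType) K (u v : R) : 0 < u -> 0 < v ->
  (K.+1)%:R * v ^+ 2 < 2 * (K.+2)%:R * u ^+ 2 ->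
  exists d (p : 'I_K.+3 -> 'rV[R]_d), one_edge_simplex p u v.
Proof.
move=> u0 v0 Huv.
pose s := Num.sqrt (u ^+ 2 / 2). pose be := v / 2. pose al := s / (K.+1)%:R.
pose G := u ^+ 2 * (K.+2)%:R / (2 * (K.+1)%:R) - v ^+ 2 / 4.
pose ga := Num.sqrt G.
have k0 : (K.+1)%:R != 0 :> R by rewrite pnatr_eq0.
have k0' : 1 + K%:R != 0 :> R by rewrite addrC natr1 pnatr_eq0.
have G0 : 0 < G.
  have -> : G = (2 * (K.+2)%:R * u ^+ 2 - (K.+1)%:R * v ^+ 2) / (4 * (K.+1)%:R).
    by rewrite /G; field.
  by rewrite divr_gt0 ?subr_gt0 // mulr_gt0 // ltr0n.
have s2 : s ^+ 2 = u ^+ 2 / 2 by rewrite sqr_sqrtr // divr_ge0 // sqr_ge0.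
have g2 : ga ^+ 2 = G by rewrite sqr_sqrtr // ltW.
have s0 : 0 < s by rewrite sqrtr_gt0 divr_gt0 // exprn_gt0.
have ga0 : 0 < ga by rewrite sqrtr_gt0.
have be0 : 0 < be by rewrite divr_gt0.
have H1 : Num.sqrt (4 * be ^+ 2) = v.
  by rewrite (_ : 4 * be ^+ 2 = v ^+ 2) ?sqrtr_sqr ?gtr0_norm // /be; field.
have H2 : Num.sqrt (2 * s ^+ 2) = u.
  by rewrite s2 (_ : 2 * (u ^+ 2 / 2) = u ^+ 2) ?sqrtr_sqr ?gtr0_norm //; field.
have H3 : Num.sqrt (be ^+ 2 + ga ^+ 2 + al ^+ 2 *+ K.+1 + (s ^+ 2 - 2 * al * s)) = u.
  rewrite (_ : be ^+ 2 + ga ^+ 2 + al ^+ 2 *+ K.+1 + (s ^+ 2 - 2 * al * s) = u ^+ 2)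
    ?sqrtr_sqr ?gtr0_norm //.
  rewrite g2 /G /al /be (_ : u ^+ 2 = 2 * s ^+ 2); last by rewrite s2; field.
  by field.
pose p := fun i : 'I_K.+3 => \row_(m < K.+3) cf s al be ga i m.
exists K.+3, p; split.
  move=> c _ H.
  pose c' := fun n : nat => c (inord n).
  have E : forall m (Hm : (m < K.+3)%N), \sum_(i < K.+3) c' i * cf s al be ga i m = 0.
    move=> m Hm; transitivity ((\sum_(i < K.+3) c i *: p i) ord0 (Ordinal Hm)); last by rewrite H mxE.
    by rewrite summxE; apply: eq_bigr => i _; rewrite !mxE /c' inord_val.
  have e0 := E 0%N isT; have e1 := E 1%N isT.
  rewrite (peel K (fun i => c' i * cf s al be ga i 0)) /= big1 ?addr0 in e0; last by move=> i _; rewrite mulr0.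
  rewrite (peel K (fun i => c' i * cf s al be ga i 1)) /= big1 ?addr0 in e1; last by move=> i _; rewrite mulr0.
  have h0 : c' 0%N = c' 1%N.
    apply/eqP; rewrite -subr_eq0; apply/eqP.
    have : (c' 0%N - c' 1%N) * be = 0 by rewrite -e0; ring.
    by move/eqP; rewrite mulf_eq0 (gt_eqF be0) orbF => /eqP.
  have h1 : c' 0%N = 0.
    have : (2 * c' 0%N) * ga = 0 by rewrite -e1 h0; ring.
    move/eqP; rewrite mulf_eq0 (gt_eqF ga0) orbF mulf_eq0 => /orP [|/eqP //].
    by rewrite pnatr_eq0.
  have h2 : forall e, (e < K.+1)%N -> c' e.+2 = 0.
    move=> e He; have := E e.+2 He.
    rewrite (peel K (fun i => c' i * cf s al be ga i e.+2)) /= -h0 h1 mul0r !add0r.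
    rewrite (eq_bigr (fun i : 'I_K.+1 => (c' i.+2 * s) * ((i : nat) == e)%:R)); last first.
      by move=> i _; rewrite !eqSS eq_sym; case: (eqVneq e i) => _ /=; ring.
    rewrite (sum_indn (fun i => c' i.+2 * s)) // => /eqP.
    by rewrite mulf_eq0 (gt_eqF s0) orbF => /eqP.
  move=> i; rewrite -(inord_val i); case: i => [[|[|e]] Hi] /=.
  - exact: h1.
  - exact: (etrans (esym h0) h1).
  - exact: h2.
exists ord0, (@Ordinal K.+3 1 isT); split => // k l kl.
rewrite edistE /nrm2.
rewrite (eq_bigr (fun m : 'I_K.+3 => (cf s al be ga k m - cf s al be ga l m) ^+ 2)); last first.
  by move=> m _; rewrite !mxE.
rewrite dist_cf; [| by rewrite -ltnS | by rewrite -ltnS | exact: kl].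
rewrite -!val_eqE /=.
case: ifP => _; first exact: H1.
by case: ifP => _; [exact: H2 | exact: H3].
Qed.


Lemma forward (R : rcfType) (N d : nat) (p : 'I_N.+2 -> 'rV[R]_d) (u v : R) :
  (1 <= N)%N -> 0 < u -> 0 < v -> one_edge_simplex p u v ->
  N%:R * v ^+ 2 < 2 * (N.+1)%:R * u ^+ 2.
Proof.
move=> N1 u0 v0 [Hind [i [j [Hij Hd]]]].
have Hji : j != i by rewrite eq_sym.
have sum_ind1 : forall m (j0 : 'I_m), \sum_(l < m) (l == j0)%:R = 1 :> R.
  move=> m j0; rewrite (eq_bigr (fun l => 1 * (l == j0)%:R)) ?(sum_ind (fun=> 1)) // => l _; by rewrite mul1r.
pose a := fun k : 'I_N.+2 => -2 + (N%:R + 2) * ((k == i)%:R + (k == j)%:R) : R.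
have Ha : \sum_(k < N.+2) a k = 0.
  rewrite /a big_split /= sumr_const card_ord -mulr_sumr big_split /= !sum_ind1.
  ring.
have ai : a i = N%:R by rewrite /a eqxx (negbTE Hij) /=; ring.
have aj : a j = N%:R by rewrite /a eqxx (negbTE Hji) /=; ring.
have HD : forall k l, nrm2 (p k - p l) = u ^+ 2 - u ^+ 2 * (l == k)%:R +
    (v ^+ 2 - u ^+ 2) * ((k == i)%:R * (l == j)%:R + (k == j)%:R * (l == i)%:R).
  move=> k l.
  have c1 : (k == i) && (k == j) = false.
    by case: (k =P i) => [->|]; rewrite ?(negbTE Hij).
  have c2 : (l == i) && (l == j) = false.
    by case: (l =P i) => [->|]; rewrite ?(negbTE Hij).
  case: (eqVneq l k) => [->|lk].
    rewrite subrr /nrm2 big1 ?eqxx; last by move=> c _; rewrite mxE expr0n.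
    move: c1; case: (k == i); case: (k == j) => //= _; ring.
  have kl : k != l by rewrite eq_sym.
  have := Hd k l kl; rewrite edistE => H.
  have -> : nrm2 (p k - p l) = (Num.sqrt (nrm2 (p k - p l))) ^+ 2 by rewrite sqr_sqrtr ?nrm2_ge0.
  rewrite H.
  move: c1 c2; case: (k == i); case: (k == j); case: (l == i); case: (l == j) => //= _ _; ring.
have inner : forall k, \sum_(l < N.+2) a k * a l * nrm2 (p k - p l) =
    a k * (- a k * u ^+ 2) + a k * (v ^+ 2 - u ^+ 2) * ((k == i)%:R * a j + (k == j)%:R * a i).
  move=> k.
  rewrite (eq_bigr (fun l => a l * (a k * u ^+ 2) + (a l * (- a k * u ^+ 2)) * (l == k)%:R
     + (a l * (a k * (v ^+ 2 - u ^+ 2) * (k == i)%:R)) * (l == j)%:R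
     + (a l * (a k * (v ^+ 2 - u ^+ 2) * (k == j)%:R)) * (l == i)%:R)); last first.
    by move=> l _; rewrite HD; ring.
  rewrite !big_split /= !sum_ind -mulr_suml Ha; ring.
pose w := \sum_(k < N.+2) a k *: p k.
have Hw : nrm2 w = N%:R * (2 * N.+1%:R * u ^+ 2 - N%:R * v ^+ 2).
  rewrite /w nrm2A //.
  under eq_bigr => k _ do rewrite inner ai aj.
  rewrite (eq_bigr (fun k => a k * (2 * u ^+ 2) + (a k * (- (N%:R + 2) * u ^+ 2) + a k * (v ^+ 2 - u ^+ 2) * N%:R) * (k == i)%:R
     + (a k * (- (N%:R + 2) * u ^+ 2) + a k * (v ^+ 2 - u ^+ 2) * N%:R) * (k == j)%:R)); last first.
    move=> k _; have ak : a k = -2 + (N%:R + 2) * ((k == i)%:R + (k == j)%:R) by [].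
    rewrite {2}ak; ring.
  rewrite !big_split /= !sum_ind -mulr_suml Ha ai aj.
  by field.
have w0 : w != 0.
  apply/negP => /eqP w0.
  have := Hind a Ha w0 i; rewrite ai => /eqP; rewrite pnatr_eq0 => /eqP N0.
  by move: N1; rewrite N0.
have : 0 < nrm2 w.
  rewrite lt0r nrm2_ge0 andbT; apply/negP => /eqP /nrm2_eq0 /eqP; exact/negP.
rewrite Hw pmulr_rgt0 ?ltr0n // subr_gt0 => H.
exact: H.
Qed.

Import Order.TTheory GRing.Theory Num.Theory.


Unset Implicit Arguments.
Set Strict Implicit.

Theorem corollary5p3 (R : rcfType) (n : nat) (u v : R) :
  (2 <= n)%N -> 0 < u -> 0 < v ->
  ((exists (d : nat) (p : 'I_n.+1 -> 'rV[R]_d), one_edge_simplex p u v) <->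
   (0 < v / u /\ v / u < Num.sqrt ((2 * n)%:R / (n.-1)%:R))).
Proof.
case: n => [|[|K]] // _ u0 v0 /=.
have vu0 : 0 < v / u by rewrite divr_gt0.
have E : (v / u < Num.sqrt ((2 * K.+2)%:R / (K.+1)%:R)) =
         ((K.+1)%:R * v ^+ 2 < 2 * (K.+2)%:R * u ^+ 2).
  rewrite -{1}(gtr0_norm vu0) -sqrtr_sqr ltr_sqrt; last by rewrite divr_gt0 ?ltr0n.
  rewrite ltr_pdivlMr ?ltr0n // expr_div_n mulrAC ltr_pdivrMr ?exprn_gt0 // natrM.
  by rewrite [v ^+ 2 * _]mulrC.
rewrite E; split.
  by move=> [d [p Hp]]; split => //; exact: (forward _ u0 v0 Hp).
by move=> [_ H]; apply: backward.
Qed.
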